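(* Let $X$ be a Banach space, $C\subset X$ a nonempty generalized polyhedral convex set, and $f:X\to\mathbb R$ twice continuously Fréchet differentiable on $X$. If $\bar x$ is a local minimum of $\min\{f(x)\mid x\in C\}$, then: (c0) $\langle\nabla f(\bar x),v\rangle\ge0$ for all $v\in T_C(\bar x)$; (c1) for every $v\in T_C(\bar x)$ with $\langle\nabla f(\bar x),v\rangle=0$, one has $\langle\nabla f(\bar x),w\rangle\ge0$ for all $w\in T^2_C(\bar x,v)$; (c2) $\langle\nabla^2 f(\bar x)v,v\rangle\ge0$ for all $v\in T_C(\bar x)$ with $\langle\nabla f(\bar x),v\rangle=0$. *)

(* Defs.v *)
From HB Require Import structures.
From mathcomp Require Import all_boot all_order all_algebra.
From mathcomp Require Import all_classical all_reals all_analysis.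
Set Implicit Arguments. Unset Strict Implicit. Unset Printing Implicit Defensive.
Import Order.TTheory GRing.Theory Num.Theory.
Import numFieldNormedType.Exports.
Local Open Scope classical_set_scope.
Local Open Scope ring_scope.

Section Defs.
Context {R : realType} {X : completeNormedModType R}.

Definition closed_affine_subspace (L : set X) : Prop :=
  exists (x0 : X) (L0 : set X),
    [/\ L0 0, (forall (a : R) (u v : X), L0 u -> L0 v -> L0 (a *: u + v)),
        closed L0 & L = [set x0 + y | y in L0]].

Definition gen_polyhedral (C : set X) : Prop :=
  exists (m : nat) (xs : 'I_m -> X -> R) (alpha : 'I_m -> R) (L : set X),
    [/\ (forall i, forall (a : R) (u v : X), xs i (a *: u + v) = a * xs i u + xs i v),
        (forall i, continuous (xs i)),
        closed_affine_subspace L &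
        C = L `&` [set x | forall i, xs i x <= alpha i]].

Definition tangent_cone (C : set X) (xb : X) : set X :=
  [set v | exists (t : nat -> R) (vn : nat -> X),
     [/\ (forall n, 0 < t n), t @ \oo --> 0, vn @ \oo --> v &
         forall n, C (xb + t n *: vn n)]].

Definition second_tangent_set (C : set X) (xb v : X) : set X :=
  [set w | exists (t : nat -> R) (wn : nat -> X),
     [/\ (forall n, 0 < t n), t @ \oo --> 0, wn @ \oo --> w &
         forall n, C (xb + t n *: v + (t n ^+ 2 / 2) *: wn n)]].

(* f is twice continuously Frechet differentiable on X, with second
   Frechet derivative D2f (D2f x h k = <nabla^2 f(x) h, k>):
   - f is Frechet differentiable everywhere (first derivative 'd f x);
   - D2f x is a bounded bilinear form;
   - x |-> 'd f x is Frechet differentiable in operator norm with derivative D2f x;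
   - x |-> D2f x is continuous in the operator norm. *)
Definition twice_cont_frechet (f : X -> R) (D2f : X -> X -> X -> R) : Prop :=
  [/\ forall x, differentiable f x,
      forall x, (forall (a : R) (h1 h2 k : X),
                   D2f x (a *: h1 + h2) k = a * D2f x h1 k + D2f x h2 k) /\
                (forall (a : R) (h k1 k2 : X),
                   D2f x h (a *: k1 + k2) = a * D2f x h k1 + D2f x h k2),
      forall x, exists M : R, forall h k, `|D2f x h k| <= M * `|h| * `|k|,
      forall x (eps : R), 0 < eps -> exists2 delta : R, 0 < delta &
        forall h, `|h| < delta -> forall k,
          `|'d f (x + h) k - 'd f x k - D2f x h k| <= eps * `|h| * `|k| &
      forall x (eps : R), 0 < eps -> exists2 delta : R, 0 < delta &
        forall y, `|y - x| < delta -> forall h k,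
          `|D2f y h k - D2f x h k| <= eps * `|h| * `|k| ].

Definition local_min_on (f : X -> R) (C : set X) (xb : X) : Prop :=
  C xb /\ \forall x \near xb, C x -> f xb <= f x.

End Defs.

(* Main.v *)
Require Import Defs.
From HB Require Import structures.
From mathcomp Require Import all_boot all_order all_algebra.
From mathcomp Require Import all_classical all_reals all_analysis.
From mathcomp Require Import lra.
Import Order.TTheory GRing.Theory Num.Theory.
Import numFieldNormedType.Exports.
Local Open Scope classical_set_scope.
Local Open Scope ring_scope.
Section S.
Context {R : realType} {X : completeNormedModType R}.

Lemma line_derive (f : X -> R) (xb d : X) (t : R) :
  differentiable f (xb + t *: d) ->
  is_derive t 1 (fun s : R => f (xb + s *: d)) ('d f (xb + t *: d) d).
Proof.
move=> df.
have E : (fun h : R => h^-1 *: (((fun s : R => f (xb + s *: d)) \o shift t) (h *: 1) - f (xb + t *: d)))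
  = (fun h : R => h^-1 *: ((f \o shift (xb + t *: d)) (h *: d) - f (xb + t *: d))).
  apply: funext => h /=.
  rewrite /shift /= [h *: 1]mulr1 scalerDl. by congr (_ *: (f _ - _)); rewrite addrCA.
constructor.
  by rewrite /derivable E; exact: diff_derivable.
by rewrite /derive E; exact: deriveE.
Qed.

Lemma descent (f : X -> R) (C : set X) (xb d : X) :
  local_min_on f C xb -> (forall x, differentiable f x) ->
  (exists2 del, 0 < del & forall t, 0 < t < del -> C (xb + t *: d)) ->
  (exists2 del, 0 < del & forall s, 0 < s < del -> 'd f (xb + s *: d) d < 0) ->
  False.
Proof.
move=> [Cxb /nbhs_ballP [e e0 He]] dif [d1 d10 H1] [d2 d20 H2].
pose t := Num.min d1 (Num.min d2 (e / (`|d| + 1))) / 2.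
have nd : 0 < `|d| + 1 by rewrite ltr_wpDl.
have t0 : 0 < t by rewrite divr_gt0 // !lt_min d10 d20 divr_gt0.
have tm : t < Num.min d1 (Num.min d2 (e / (`|d| + 1))).
  by rewrite /t ltr_pdivrMr // mulr2n mulrDr mulr1 ltrDl !lt_min d10 d20 divr_gt0.
move: tm; rewrite !lt_min => /and3P [td1 td2 te].
have gc : continuous (fun s : R => f (xb + s *: d)).
  move=> x; apply: differentiable_continuous; apply/derivable1_diffP.
  by have [] := @line_derive f xb d x (dif _).
have gw : {within `[0, t], continuous (fun s : R => f (xb + s *: d))}.
  exact: continuous_subspaceT.
have [c /[dup] cin] := @MVT R (fun s => f (xb + s *: d)) (fun s => 'd f (xb + s *: d) d) 0 t t0
  (fun x _ => @line_derive f xb d x (dif _)) gw.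
rewrite in_itv /= => /andP [c0 ct].
rewrite scale0r addr0 => E.
have : f xb <= f (xb + t *: d).
  apply: (He (xb + t *: d)); last (apply: H1; by rewrite t0).
  rewrite -ball_normE /= opprD addrA subrr sub0r normrN normrZ gtr0_norm //.
  rewrite (le_lt_trans (y := t * (`|d| + 1))) //; first by rewrite ler_pM2l // lerDl.
  by rewrite -ltr_pdivlMr.
rewrite -subr_ge0 E subr0 pmulr_lge0 // => /(lt_le_trans (H2 c _)).
by rewrite lt_irreflexive c0 (lt_trans ct td2) => /(_ isT).
Qed.

Lemma lin0 {V : lmodType R} {l : V -> R} :
  (forall (a : R) (u v : V), l (a *: u + v) = a * l u + l v) -> l 0 = 0.
Proof.
move=> H; have := H 1 0 0; rewrite scale1r addr0 mul1r => h.
by apply: (addrI (l 0)); rewrite addr0 -h.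
Qed.

Lemma linZ {V : lmodType R} {l : V -> R} a u :
  (forall (a : R) (u v : V), l (a *: u + v) = a * l u + l v) -> l (a *: u) = a * l u.
Proof. by move=> H; have := H a u 0; rewrite addr0 (lin0 H) addr0. Qed.

Lemma linD {V : lmodType R} {l : V -> R} u v :
  (forall (a : R) (u v : V), l (a *: u + v) = a * l u + l v) -> l (u + v) = l u + l v.
Proof. by move=> H; have := H 1 u v; rewrite scale1r mul1r. Qed.

Lemma deriv_bound (f : X -> R) D2f xb d eps :
  twice_cont_frechet f D2f -> 0 < eps ->
  exists2 del, 0 < del & forall s, 0 < s < del ->
    'd f (xb + s *: d) d <= 'd f xb d + s * D2f xb d d + eps * s * (`|d| * `|d|).
Proof.
move=> [_ Hbil _ Hd _] e0.
have [del del0 Hdel] := Hd xb eps e0.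
have nd : 0 < `|d| + 1 by rewrite ltr_wpDl.
exists (del / (`|d| + 1)); first by rewrite divr_gt0.
move=> s /andP [s0 sd].
have hs : `|s *: d| < del.
  rewrite normrZ gtr0_norm // (le_lt_trans (y := s * (`|d| + 1))) //.
    by rewrite ler_pM2l // lerDl.
  by rewrite -ltr_pdivlMr.
have := Hdel _ hs d.
have -> : D2f xb (s *: d) d = s * D2f xb d d.
  exact: (linZ (l := fun h => D2f xb h d)) (fun a u v => (Hbil xb).1 a u v d).
rewrite normrZ gtr0_norm // => /ler_normlW.
by rewrite lerBlDr lerBlDr -!mulrA => h; lra.
Qed.

Definition feasible (C : set X) (xb d : X) :=
  exists2 del : R, 0 < del & forall t, 0 < t < del -> C (xb + t *: d).

Lemma first_order f D2f C xb d : twice_cont_frechet f D2f -> local_min_on f C xb ->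
  feasible C xb d -> 0 <= 'd f xb d.
Proof.
move=> Hf Hm Hfe; rewrite leNgt; apply/negP => a0.
have [del del0 Hdel] := @deriv_bound f D2f xb d 1 Hf ltr01.
set c := D2f xb d d in Hdel.
set a := 'd f xb d in a0 Hdel.
have K : 0 < `|c| + `|d| * `|d| + 1.
  by rewrite ltr_wpDl // addr_ge0 // mulr_ge0.
have dif : forall x, differentiable f x by case: Hf.
apply: (@descent f C xb d Hm dif Hfe); exists (Num.min del (- a / (`|c| + `|d| * `|d| + 1))).
  by rewrite lt_min del0 divr_gt0 // oppr_gt0.
move=> s /andP [s0]; rewrite lt_min => /andP [sd sa].
apply: (le_lt_trans (Hdel s _)); first by rewrite s0.
move: sa; rewrite ltr_pdivlMr // => sa.
have : c <= `|c| := ler_norm c.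
have : 0 <= `|d| * `|d| by rewrite mulr_ge0.
move=> h1 h2; nra.
Qed.

Lemma second_order f D2f C xb d : twice_cont_frechet f D2f -> local_min_on f C xb ->
  feasible C xb d -> 'd f xb d = 0 -> 0 <= D2f xb d d.
Proof.
move=> Hf Hm Hfe a0; rewrite leNgt; apply/negP => c0.
have K : 0 < `|d| * `|d| + 1 by rewrite ltr_wpDl // mulr_ge0.
have e0 : 0 < - D2f xb d d / (2 * (`|d| * `|d| + 1)) by rewrite divr_gt0 ?oppr_gt0 // mulr_gt0.
have [del del0 Hdel] := @deriv_bound f D2f xb d _ Hf e0.
rewrite a0 in Hdel.
have dif : forall x, differentiable f x by case: Hf.
apply: (@descent f C xb d Hm dif Hfe); exists del => // s /andP [s0 sd].
apply: (le_lt_trans (Hdel s _)); first by rewrite s0.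
set c := D2f xb d d in c0 e0 *.
set q := `|d| * `|d| in K e0 *.
set e := - c / (2 * (q + 1)) in e0 *.
have E : e * (2 * (q + 1)) = - c by rewrite /e divfK // mulf_neq0 // gt_eqF.
have E2 : s * e * (2 * (q + 1)) = s * (- c) by rewrite -mulrA E.
have h1 : 0 < s * e by rewrite mulr_gt0.
nra.
Qed.

Lemma near_right_ex (P : R -> Prop) :
  (\forall t \near 0^'+, P t) -> exists2 e : R, 0 < e & forall t, 0 < t < e -> P t.
Proof.
move=> /nbhs_ballP [e e0 H]; exists e => // t /andP [t0 te].
apply: H => //; rewrite /ball /= sub0r normrN gtr0_norm //.
Qed.

Section Poly.
Variables (m : nat) (xs : 'I_m -> X -> R) (alpha : 'I_m -> R) (x0 : X) (L0 : set X).
Hypothesis Hlin : forall i, forall (a : R) (u v : X), xs i (a *: u + v) = a * xs i u + xs i v.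
Hypothesis Hcont : forall i, continuous (xs i).
Hypothesis L00 : L0 0.
Hypothesis L0lin : forall (a : R) (u v : X), L0 u -> L0 v -> L0 (a *: u + v).
Hypothesis L0cl : closed L0.
Let L := [set x0 + y | y in L0].
Let C := L `&` [set x | forall i, xs i x <= alpha i].

Lemma L0Z a {u} : L0 u -> L0 (a *: u).
Proof. by move=> h; rewrite -[_ *: _]addr0; apply: L0lin. Qed.
Lemma L0D {u v} : L0 u -> L0 v -> L0 (u + v).
Proof. by move=> h1 h2; rewrite -[u]scale1r; apply: L0lin. Qed.
Lemma L0B {u v} : L0 u -> L0 v -> L0 (u - v).
Proof. by move=> h1 h2; rewrite -scaleN1r; apply: L0D => //; apply: L0Z. Qed.

Lemma inL z : L z <-> L0 (z - x0).
Proof.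
split; first by move=> [y Ly <-]; rewrite addrC addKr.
by move=> h; exists (z - x0) => //; rewrite addrC subrK.
Qed.

Lemma LL0 {z1 z2} : L z1 -> L z2 -> L0 (z1 - z2).
Proof.
move=> /inL h1 /inL h2; have := L0B h1 h2.
by rewrite opprB addrA subrK.
Qed.

Definition dir_ok (xb d : X) := L0 d /\ forall i, xs i xb = alpha i -> xs i d <= 0.

Lemma dir_feasible xb d : C xb -> dir_ok xb d -> feasible C xb d.
Proof.
move=> [Lxb Ixb] [L0d Hd].
have Hi : forall i, \forall t \near 0^'+, xs i (xb + t *: d) <= alpha i.
  move=> i.
  have [/eqP E|lt] := boolP (xs i xb == alpha i).
    apply: filterS (nbhs_right_gt 0) => t t0.
    by rewrite addrC Hlin E gerDr pmulr_rle0 // Hd.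
  have g0 : 0 < alpha i - xs i xb.
    by rewrite subr_gt0 lt_neqAle lt Ixb.
  have nd : 0 < `|xs i d| + 1 by rewrite ltr_wpDl.
  apply: filterS2 (nbhs_right_gt 0) (nbhs_right_lt (divr_gt0 g0 nd)) => t t0 tz.
  rewrite addrC Hlin -lerBrDr (le_trans (ler_norm _)) // normrM gtr0_norm // ltW //.
  apply: (le_lt_trans (y := t * (`|xs i d| + 1))); first by rewrite ler_pM2l // lerDl.
  by rewrite -ltr_pdivlMr.
have [e e0 He] := near_right_ex _ (filter_forall _ Hi).
exists e => // t te; split; last exact: He.
apply/inL; move/inL: Lxb => h.
by rewrite addrAC; apply: L0D => //; apply: L0Z.
Qed.

Lemma tangent_ok xb v : C xb -> tangent_cone C xb v -> dir_ok xb v.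
Proof.
move=> [Lxb Ixb] [t [vn [t0 tc vc Cn]]].
have L0vn n : L0 (vn n).
  have := LL0 (Cn n).1 Lxb; rewrite addrAC subrr add0r => /(L0Z (t n)^-1).
  by rewrite scalerA mulVf ?scale1r // gt_eqF.
split; first by apply: (@closed_cvg _ _ \oo _ vn L0 L0cl _ v vc); apply: nearW.
move=> i E.
have cl : closed (xs i @^-1` [set r : R | r <= 0]).
  by apply: preimage_closed => [x _|]; [exact: Hcont|exact: closed_le].
apply: (@closed_cvg _ _ \oo _ vn _ cl _ _ vc); apply: nearW => n /=.
have := (Cn n).2 i; rewrite addrC Hlin E gerDr.
by rewrite pmulr_rle0.
Qed.

Lemma second_ok xb v w : C xb -> dir_ok xb v -> second_tangent_set C xb v w ->
  L0 w /\ forall i, xs i xb = alpha i -> xs i v = 0 -> xs i w <= 0.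
Proof.
move=> [Lxb Ixb] [L0v _] [t [wn [t0 tc wc Cn]]].
have t2 n : 0 < t n ^+ 2 / 2 by rewrite divr_gt0 // exprn_gt0.
have L0wn n : L0 (wn n).
  have h := LL0 (Cn n).1 Lxb.
  have := L0B h (L0Z (t n) L0v); rewrite -addrA -opprD [xb + _ + _]addrC addrK => /(L0Z (t n ^+ 2 / 2)^-1).
  by rewrite scalerA mulVf ?scale1r // gt_eqF.
split; first by apply: (@closed_cvg _ _ \oo _ wn L0 L0cl _ w wc); apply: nearW.
move=> i E V0.
have cl : closed (xs i @^-1` [set r : R | r <= 0]).
  by apply: preimage_closed => [x _|]; [exact: Hcont|exact: closed_le].
apply: (@closed_cvg _ _ \oo _ wn _ cl _ _ wc); apply: nearW => n /=.
have := (Cn n).2 i; rewrite addrC Hlin [xb + _]addrC Hlin V0 mulr0 add0r E gerDr.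
by rewrite pmulr_rle0.
Qed.

Lemma second_dir xb v w : C xb -> dir_ok xb v ->
  L0 w -> (forall i, xs i xb = alpha i -> xs i v = 0 -> xs i w <= 0) ->
  exists2 s : R, 0 < s & dir_ok xb (v + s *: w).
Proof.
move=> [Lxb Ixb] [L0v Hv] L0w Hw.
have Hi : forall i, \forall s \near 0^'+, xs i xb = alpha i -> xs i (v + s *: w) <= 0.
  move=> i; have [/eqP E|ne] := boolP (xs i xb == alpha i); last first.
    by apply: nearW => s /eqP; rewrite (negbTE ne).
  have := Hv i E; rewrite le_eqVlt => /orP [/eqP V0|vlt].
    apply: filterS (nbhs_right_gt 0) => s s0 _.
    by rewrite addrC Hlin V0 addr0 pmulr_rle0 // Hw.
  have nd : 0 < `|xs i w| + 1 by rewrite ltr_wpDl.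
  have g0 : 0 < - xs i v by rewrite oppr_gt0.
  apply: filterS2 (nbhs_right_gt 0) (nbhs_right_lt (divr_gt0 g0 nd)) => s s0 sz _.
  rewrite addrC Hlin -lerBrDr sub0r (le_trans (ler_norm _)) // normrM gtr0_norm // ltW //.
  apply: (le_lt_trans (y := s * (`|xs i w| + 1))); first by rewrite ler_pM2l // lerDl.
  by rewrite -ltr_pdivlMr.
have [e e0 He] := near_right_ex _ (filter_forall _ Hi).
exists (e / 2); first by rewrite divr_gt0.
split; first by apply: L0D => //; apply: L0Z.
apply: He; rewrite divr_gt0 //= ltr_pdivrMr // mulr2n mulrDr mulr1 ltrDl //.
Qed.

End Poly.
End S.

Theorem theorem3p3 (R : realType) (X : completeNormedModType R)
  (C : set X) (f : X -> R) (D2f : X -> X -> X -> R) (xb : X) :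
  C !=set0 -> gen_polyhedral C -> twice_cont_frechet f D2f ->
  local_min_on f C xb ->
  [/\ (forall v, tangent_cone C xb v -> 0 <= 'd f xb v),
      (forall v, tangent_cone C xb v -> 'd f xb v = 0 ->
         forall w, second_tangent_set C xb v w -> 0 <= 'd f xb w) &
      (forall v, tangent_cone C xb v -> 'd f xb v = 0 -> 0 <= D2f xb v v)].
Proof.
move=> _ Hpoly Hf Hm.
have [m [xs [alpha [L [Hlin Hcont [x0 [L0 [L00 L0lin L0cl EL]]] EC]]]]] := Hpoly.
subst C L.
have Cxb := Hm.1.
have Tok v := @tangent_ok R X m xs alpha x0 L0 Hlin Hcont L00 L0lin L0cl xb v Cxb.
have Fe d := @dir_feasible R X m xs alpha x0 L0 Hlin L00 L0lin xb d Cxb.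
split.
- move=> v Tv; exact: (@first_order R X f D2f _ xb _ Hf Hm (Fe _ (Tok _ Tv))).
- move=> v Tv dv0 w Tw.
  have ok := Tok _ Tv.
  have [L0w Hw] := @second_ok R X m xs alpha x0 L0 Hlin Hcont L00 L0lin L0cl xb v w Cxb ok Tw.
  have [s s0 oks] := @second_dir R X m xs alpha x0 L0 Hlin L00 L0lin xb v w Cxb ok L0w Hw.
  have := @first_order R X f D2f _ xb _ Hf Hm (Fe _ oks).
  by rewrite linearD linearZ dv0 add0r pmulr_rge0.
- move=> v Tv dv0; exact: (@second_order R X f D2f _ xb _ Hf Hm (Fe _ (Tok _ Tv)) dv0).
Qed.
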